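(* Let $k,n,k',n'$ be positive integers. If a $(k,n)$ strategy and a $(k',n')$ strategy for the GKS game exist, then a $(kk',nn')$ strategy for the GKS game exists.
   Context: The GKS game with parameter $n$ (a positive integer). A strategy pair $(S,T)$ consists of a function $S$ assigning a bit in $\{0,1\}$ to every sequence $\pi_1\pi_2\ldots\pi_i$ of distinct elements of $[n]=\{1,\dots,n\}$ with $1\le i\le n-1$, and a function $T:\{0,1\}^n\to 2^{[n]}$. For a permutation $\pi=\pi_1\ldots\pi_n$ of $[n]$ and a bit $b$, the final array $A_{\rm final}\in\{0,1\}^n$ is defined by $A_{\rm final}[\pi_i]=S(\pi_1\ldots\pi_i)$ for $1\le i\le n-1$ and $A_{\rm final}[\pi_n]=b$. The pair $(S,T)$ is a $(k,n)$ strategy if for every permutation $\pi$ of $[n]$ and every bit $b$ we have $\pi_n\in T(A_{\rm final})$, and moreover $|T(\sigma)|\le k$ for every $\sigma\in\{0,1\}^n$. *)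

(* Defs.v *)
From mathcomp Require Import all_boot.
Set Implicit Arguments. Unset Strict Implicit. Unset Printing Implicit Defensive.

(* [n] is represented by 'I_n.  A sequence pi_1 ... pi_n of [n] (a permutation)
   is written  rcons pre x  with  x = pi_n  and  pre = pi_1 ... pi_{n-1}. *)

(* Final array: A[pi_i] = S(pi_1 ... pi_i) for i <= n-1, A[pi_n] = b. *)
Definition A_final (n : nat) (S : seq 'I_n -> bool) (pre : seq 'I_n) (b : bool)
  : {ffun 'I_n -> bool} :=
  [ffun y => if y \in pre then S (take (index y pre).+1 pre) else b].

(* (S,T) is a (k,n) strategy.  S is given as a total function on sequences,
   only its values on sequences of distinct elements of length 1..n-1 matter. *)
Definition GKS_strategy (k n : nat) (S : seq 'I_n -> bool)
  (T : {ffun 'I_n -> bool} -> {set 'I_n}) : Prop :=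
  (forall (pre : seq 'I_n) (x : 'I_n) (b : bool),
      uniq (rcons pre x) -> size (rcons pre x) = n ->
      x \in T (@A_final n S pre b))
  /\ (forall sigma : {ffun 'I_n -> bool}, #|T sigma| <= k).

Definition has_GKS_strategy (k n : nat) : Prop :=
  exists (S : seq 'I_n -> bool) (T : {ffun 'I_n -> bool} -> {set 'I_n}),
    @GKS_strategy k n S T.

(* Main.v *)
Require Import Defs.
From mathcomp Require Import all_boot.
Set Implicit Arguments. Unset Strict Implicit. Unset Printing Implicit Defensive.

Definition pref (T : eqType) (s : seq T) (y : T) := take (index y s).+1 s.

Lemma prefD (T : eqType) (s : seq T) y : y \in s ->
  exists s1 s2, [/\ s = rcons s1 y ++ s2, y \notin s1 & pref s y = rcons s1 y].
Proof.
move=> ys; exists (take (index y s) s), (drop (index y s).+1 s).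
have hi : index y s < size s by rewrite index_mem.
have ep : pref s y = rcons (take (index y s) s) y.
  by rewrite /pref (take_nth y hi) nth_index.
split=> //.
- by rewrite -ep /pref cat_take_drop.
- apply/negP=> yt.
  have := index_mem y (take (index y s) s); rewrite yt size_take hi.
  set k := index y s in yt *.
  have e : index y (take k s ++ drop k s) = k by rewrite cat_take_drop.
  by rewrite index_cat yt in e; rewrite e ltnn.
Qed.

Lemma pref_cat (T : eqType) (t u : seq T) z : z \in t -> pref (t ++ u) z = pref t z.
Proof.
move=> zt; rewrite /pref index_cat zt take_cat.
have := index_mem z t; rewrite zt => hi.
case: ltnP => // h.
have -> : (index z t).+1 = size t by apply/eqP; rewrite eqn_leq hi h.
by rewrite subnn take0 cats0 take_size.
Qed.

Lemma pref_pref (T : eqType) (s : seq T) y z : y \in s -> z \in pref s y ->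
  pref (pref s y) z = pref s z.
Proof.
move=> ys; have [s1 [s2 [-> _ ->]]] := prefD ys => zin.
by rewrite pref_cat.
Qed.

Lemma last_pref (T : eqType) (s : seq T) y x0 : y \in s -> last x0 (pref s y) = y.
Proof. by move=> ys; have [s1 [s2 [_ _ ->]]] := prefD ys; rewrite last_rcons. Qed.

Lemma pref_map_filter (T U : eqType) (f : T -> U) (P : pred T) (s : seq T) y :
  y \in s -> P y -> {in filter P s &, injective f} ->
  pref (map f (filter P s)) (f y) = map f (filter P (pref s y)).
Proof.
move=> ys Py inj; have [s1 [s2 [es ny ->]]] := prefD ys.
rewrite es filter_cat !filter_rcons Py map_cat !map_rcons.
rewrite -cats1 -catA /=.
have nf : f y \notin map f (filter P s1).
  apply/mapP=> [[w]]; rewrite mem_filter => /andP [Pw ws1] ef.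
  have ew : y = w.
    apply: inj ef; rewrite es mem_filter ?Py ?Pw mem_cat mem_rcons ?inE ?eqxx //.
    by rewrite ws1 orbT.
  by rewrite -ew in ws1; rewrite ws1 in ny.
rewrite /pref index_cat (negbTE nf) /= eqxx addn0 take_cat ltnNge leqnSn /=.
by rewrite subSnn /= take0.
Qed.

Lemma count_pref_le (T : eqType) (P : pred T) s y : count P (pref s y) <= count P s.
Proof.
by rewrite -{2}(cat_take_drop (index y s).+1 s) count_cat leq_addr.
Qed.

Lemma count_pref_lt (T : eqType) (P : pred T) (s : seq T) y z :
  y \in s -> z \in s -> index y s < index z s -> P z ->
  count P (pref s y) < count P (pref s z).
Proof.
move=> ys zs lt Pz.
have hz : index z s < size s by rewrite index_mem.
rewrite /pref (take_nth z hz) nth_index // -cats1 count_cat /= Pz addn0 addn1 ltnS.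
rewrite -(take_takel s lt) .
by rewrite -{2}(cat_take_drop (index y s).+1 (take (index z s) s)) count_cat leq_addr.
Qed.

Lemma count_pref_exists (T : eqType) (P : pred T) (s : seq T) c :
  uniq s -> 0 < c -> count P s = c -> exists2 y, y \in s & P y && (count P (pref s y) == c).
Proof.
elim: s c => [|z s IH] c; first by move=> _ /[swap] <-.
rewrite cons_uniq => /andP [zs us] c0.
have prefz : forall y, y \in s -> pref (z :: s) y = z :: pref s y.
  move=> y ys; rewrite /pref /=.
  by case: eqP => [ez|//]; move: zs; rewrite ez ys.
have prefzz : pref (z :: s) z = [:: z] by rewrite /pref /= eqxx take0.
move=> ec; simpl in ec; move: ec.
case Pz: (P z).
- case: c c0 => // c _ [] ec.
  case: c ec => [ec|c ec].
    by exists z; rewrite ?inE ?eqxx // prefzz /= Pz.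
  have [y ys /andP [Py cy]] := IH c.+1 us isT ec.
  exists y; first by rewrite inE ys orbT.
  by rewrite Py prefz //= Pz (eqP cy).
- rewrite add0n => ec.
  have [y ys /andP [Py cy]] := IH c us c0 ec.
  exists y; first by rewrite inE ys orbT.
  by rewrite Py prefz //= Pz (eqP cy).
Qed.

Lemma uniq_all_size (T : finType) (s : seq T) :
  uniq s -> (forall z, z \in s) -> size s = #|T|.
Proof.
move=> us all; rewrite -(card_uniqP us) cardT; apply: eq_cardT => z.
by rewrite !inE all.
Qed.

Lemma uniq_size_all (T : finType) (s : seq T) :
  uniq s -> size s = #|T| -> forall z, z \in s.
Proof.
move=> us ss z.
have e : #|s| = #|[pred _ : T | true]| by rewrite (card_uniqP us) ss; apply: eq_card.
have := subset_cardP e; rewrite subset_predT => /(_ isT) /(_ z).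
by rewrite !inE => ->.
Qed.

Lemma card_bigcup_le (I T : finType) (A : {pred I}) (F : I -> {set T}) :
  #|\bigcup_(i in A) F i| <= \sum_(i in A) #|F i|.
Proof.
apply: (@big_ind2 _ _ (fun (X : {set T}) (m : nat) => #|X| <= m)) => //; first by rewrite cards0.
by move=> X1 m1 X2 m2 h1 h2; apply: leq_trans (leq_card_setU _ _).1 (leq_add h1 h2).
Qed.
From mathcomp Require Import zify.

Lemma filter_pref_full (T : eqType) (P : pred T) (s : seq T) y :
  count P (pref s y) = count P s -> filter P (pref s y) = filter P s.
Proof.
rewrite -{2 4}(cat_take_drop (index y s).+1 s) count_cat filter_cat -/(pref s y).
move=> /eqP; rewrite -{1}[count P (pref s y)]addn0 eqn_add2l eq_sym => /eqP c0.
have : size (filter P (drop (index y s).+1 s)) == 0 by rewrite size_filter c0.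
by rewrite size_eq0 => /eqP ->; rewrite cats0.
Qed.

Section Prod.
Variables (n n' : nat).
Hypothesis Hn' : 0 < n'.

Lemma row_lt (x : 'I_(n * n')) : x %/ n' < n.
Proof. by rewrite ltn_divLR. Qed.
Lemma col_lt (x : 'I_(n * n')) : x %% n' < n'.
Proof. by rewrite ltn_pmod. Qed.
Lemma idx_lt (i : 'I_n) (j : 'I_n') : i * n' + j < n * n'.
Proof. have := ltn_ord i; have := ltn_ord j; nia. Qed.

Definition row (x : 'I_(n * n')) : 'I_n := Ordinal (row_lt x).
Definition col (x : 'I_(n * n')) : 'I_n' := Ordinal (col_lt x).
Definition idx (i : 'I_n) (j : 'I_n') : 'I_(n * n') := Ordinal (idx_lt i j).

Lemma row_idx i j : row (idx i j) = i.
Proof. by apply: val_inj; rewrite /= divnMDl // divn_small ?addn0. Qed.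
Lemma col_idx i j : col (idx i j) = j.
Proof. by apply: val_inj; rewrite /= modnMDl modn_small. Qed.
Lemma idx_rc x : idx (row x) (col x) = x.
Proof. by apply: val_inj; rewrite /= -divn_eq. Qed.
Lemma rc_inj a b : row a = row b -> col a = col b -> a = b.
Proof. by move=> r c; rewrite -(idx_rc a) -(idx_rc b) r c. Qed.

Variables (S : seq 'I_n -> bool) (S' : seq 'I_n' -> bool).
Variables (T : {ffun 'I_n -> bool} -> {set 'I_n})
          (T' : {ffun 'I_n' -> bool} -> {set 'I_n'}).

Definition rowseq i (p : seq 'I_(n * n')) := map col (filter (fun z => row z == i) p).
Definition completes (p : seq 'I_(n * n')) y :=
  count (fun z => row z == row y) (pref p y) == n'.
Definition compl (p : seq 'I_(n * n')) := map row (filter (completes p) p).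
Definition Sbody x p :=
  let q := rowseq (row x) p in
  if size q == n' then S (compl p) (+) \big[addb/false]_(j <- q | j != col x) S' (pref q j)
  else S' q.
Definition Snew (p : seq 'I_(n * n')) := if p is z :: _ then Sbody (last z p) p else false.
Definition par (sg : {ffun 'I_(n * n') -> bool}) : {ffun 'I_n -> bool} :=
  [ffun i => \big[addb/false]_(j < n') sg (idx i j)].
Definition rowarr (sg : {ffun 'I_(n * n') -> bool}) i : {ffun 'I_n' -> bool} :=
  [ffun j => sg (idx i j)].
Definition Tnew sg := \bigcup_(i in T (par sg)) idx i @: T' (rowarr sg i).

Lemma Snew_pref s y : y \in s -> Snew (pref s y) = Sbody y (pref s y).
Proof.
move=> ys; have [s1 [s2 [_ _ ->]]] := prefD ys.
by case: s1 => [|a s1] //=; rewrite last_rcons.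
Qed.

Lemma size_rowseq i p : size (rowseq i p) = count (fun z => row z == i) p.
Proof. by rewrite size_map size_filter. Qed.

Lemma injcol i l : {in filter (fun z => row z == i) l &, injective col}.
Proof.
move=> a b; rewrite !mem_filter => /andP [/eqP ra _] /andP [/eqP rb _] e.
by apply: rc_inj => //; rewrite ra rb.
Qed.

Lemma strat k k' : @GKS_strategy k n S T -> @GKS_strategy k' n' S' T' ->
  @GKS_strategy (k * k') (n * n') Snew Tnew.
Proof.
move=> [H1 H2] [H1' H2']; split; last first.
  move=> sg; apply: leq_trans (card_bigcup_le _ _) _.
  apply: (@leq_trans (\sum_(i in T (par sg)) k')).
    by apply: leq_sum => i _; apply: leq_trans (leq_imset_card _ _) (H2' _).
  by rewrite sum_nat_const leq_mul2r H2 orbT.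
move=> pre x b Hu Hs.
set sg := A_final Snew pre b.
have all : forall z, z \in rcons pre x by apply: uniq_size_all; rewrite // card_ord.
move: (Hu); rewrite rcons_uniq => /andP [xnpre upre].
have inpre : forall z, z != x -> z \in pre.
  by move=> z zx; have := all z; rewrite mem_rcons inE (negbTE zx).
have cntfull : forall i, count (fun z => row z == i) (rcons pre x) = n'.
  move=> i; rewrite -size_filter -(card_uniqP (filter_uniq _ Hu)).
  have -> : #|[seq z <- rcons pre x | row z == i]| = #|idx i @: [set: 'I_n']|.
    apply: eq_card => z; rewrite mem_filter all andbT.
    apply/eqP/imsetP => [<-|[j _ ->]]; last by rewrite row_idx.
    by exists (col z) => //; rewrite idx_rc.
  rewrite card_imset ?cardsT ?card_ord //.
  by move=> j1 j2 e; rewrite -(col_idx i j1) e col_idx.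
have cntsplit : forall i, count (fun z => row z == i) pre + (row x == i) = n'.
  by move=> i; have := cntfull i; rewrite -cats1 count_cat /= addn0.
set i0 := row x.
have cnt0 : count (fun z => row z == i0) pre < n'.
  by have := cntsplit i0; rewrite eqxx; lia.
have cnti : forall i, i != i0 -> count (fun z => row z == i) pre = n'.
  by move=> i ne; have := cntsplit i; rewrite eq_sym (negbTE ne) addn0.
have cntle : forall i, count (fun z => row z == i) pre <= n'.
  by move=> i; have := cntsplit i; lia.
have cu : forall y z, y \in pre -> z \in pre -> completes pre y -> completes pre z ->
    row y = row z -> y = z.
  move=> y z yp zp cy cz ryz.
  have key : forall a c, a \in pre -> c \in pre -> completes pre a -> row a = row c ->
      ~ index a pre < index c pre.
    move=> a c ap cp ca rac lt.
    have Pc : row c == row a by rewrite rac.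
    have := @count_pref_lt _ (fun w => row w == row a) _ _ _ ap cp lt Pc.
    move: ca; rewrite /completes => /eqP ->.
    by rewrite ltnNge (leq_trans (count_pref_le _ _ _) (cntle _)).
  case: (ltngtP (index y pre) (index z pre)) => h.
  - by case: (key y z).
  - by case: (key z y) => //; rewrite ryz.
  - by rewrite -(nth_index y yp) h nth_index.
have injrow : {in filter (completes pre) pre &, injective row}.
  by move=> a c; rewrite !mem_filter => /andP [ca ap] /andP [cc cp]; apply: cu.
have inner : col x \in T' (rowarr sg i0).
  have Hu' : uniq (rcons (rowseq i0 pre) (col x)).
    have -> : rcons (rowseq i0 pre) (col x) = rowseq i0 (rcons pre x).
      by rewrite /rowseq filter_rcons eqxx map_rcons.
    by rewrite map_inj_in_uniq ?filter_uniq //; apply: injcol.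
  have Hs' : size (rcons (rowseq i0 pre) (col x)) = n'.
    by rewrite size_rcons size_rowseq; have := cntsplit i0; rewrite eqxx; lia.
  have := H1' _ _ b Hu' Hs'.
  suff -> : rowarr sg i0 = A_final S' (rowseq i0 pre) b by [].
  apply/ffunP => j; rewrite !ffunE.
  case: (j =P col x) => [->|ne].
    rewrite idx_rc (negbTE xnpre).
    case: ifP => // /mapP [w]; rewrite mem_filter => /andP [/eqP rw wp] cw.
    by have ewx := rc_inj rw (esym cw); rewrite -ewx wp in xnpre.
  have zx : idx i0 j != x.
    by apply/eqP => e; apply: ne; rewrite -e col_idx.
  have zp := inpre _ zx.
  have jin : j \in rowseq i0 pre.
    by apply/mapP; exists (idx i0 j); rewrite ?col_idx // mem_filter row_idx eqxx.
  rewrite zp jin Snew_pref // /Sbody row_idx size_rowseq.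
  have -> : (count (fun z => row z == i0) (pref pre (idx i0 j)) == n') = false.
    apply/negbTE; rewrite neq_ltn; apply/orP; left.
    exact: leq_ltn_trans (count_pref_le _ _ _) cnt0.
  congr (S' _).
  have Pz : (fun z => row z == i0) (idx i0 j) by rewrite /= row_idx eqxx.
  have e := @pref_map_filter _ _ col (fun z => row z == i0) pre (idx i0 j) zp Pz (@injcol i0 pre).
  by rewrite col_idx in e; rewrite /rowseq -e.
set pre_o := compl pre.
have i0n : i0 \notin pre_o.
  apply/mapP => [[w]]; rewrite mem_filter => /andP [cw wp] ew.
  move: cw; rewrite /completes -ew => /eqP c.
  by have := leq_ltn_trans (count_pref_le _ _ w) cnt0; rewrite c ltnn.
have ex : forall i, i != i0 -> exists2 y, y \in pre & (row y == i) && completes pre y.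
  move=> i ne; have [y yp /andP [ry cy]] := count_pref_exists upre Hn' (cnti i ne).
  by exists y => //; rewrite ry /completes (eqP ry).
have uo : uniq (rcons pre_o i0).
  by rewrite rcons_uniq i0n map_inj_in_uniq // filter_uniq.
have allo : forall i, i \in rcons pre_o i0.
  move=> i; rewrite mem_rcons inE; case: (i =P i0) => //= /eqP ne.
  have [y yp /andP [/eqP ry cy]] := ex i ne.
  by apply/mapP; exists y; rewrite ?mem_filter ?cy.
have so : size (rcons pre_o i0) = n by rewrite (uniq_all_size uo allo) card_ord.
have := H1 _ _ (par sg i0) uo so.
suff -> : A_final S pre_o (par sg i0) = par sg.
  move=> i0T; apply/bigcupP; exists i0 => //.
  by apply/imsetP; exists (col x); rewrite ?idx_rc.
apply/ffunP => i; rewrite [in LHS]ffunE.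
case: (i =P i0) => [->|/eqP ne]; first by rewrite (negbTE i0n).
have [y yp /andP [/eqP ry cy]] := ex i ne.
have iin : i \in pre_o by apply/mapP; exists y; rewrite ?mem_filter ?cy.
rewrite iin.
have eo : pref pre_o i = compl (pref pre y).
  rewrite -ry /pre_o /compl pref_map_filter //.
  congr (map row _); apply: eq_in_filter => z zin.
  by rewrite /completes pref_pref.
rewrite -/(pref pre_o i) eo ffunE.
set Q := rowseq i pre.
have uQ : uniq Q by rewrite map_inj_in_uniq ?filter_uniq //; apply: injcol.
have allQ : forall j, j \in Q.
  by apply: uniq_size_all => //; rewrite size_rowseq card_ord cnti.
have -> : \big[addb/false]_(j < n') sg (idx i j) = \big[addb/false]_(j <- Q) sg (idx i j).
  by rewrite [RHS]big_uniq //; apply: congr_big => // j; rewrite allQ.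
have fQ : rowseq i (pref pre y) = Q.
  rewrite /rowseq /Q /rowseq filter_pref_full //.
  by move: cy; rewrite /completes ry => /eqP ->; rewrite cnti.
have ciQ := allQ (col y).
rewrite (bigD1_seq (col y)) //=.
have -> : idx i (col y) = y by rewrite -ry idx_rc.
have sQ : size Q = n' by rewrite size_rowseq cnti.
rewrite /sg ffunE yp Snew_pref // /Sbody ry fQ sQ eqxx.
suff -> : \big[addb/false]_(i1 <- Q | i1 != col y) A_final Snew pre b (idx i i1) =
          \big[addb/false]_(j <- Q | j != col y) S' (pref Q j) by rewrite addbK.
rewrite big_seq_cond [RHS]big_seq_cond; apply: eq_bigr => j /andP [jQ jne].
have zx : idx i j != x.
  by apply/eqP => e; move: ne; rewrite /i0 -e row_idx eqxx.
have zp := inpre _ zx.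
rewrite ffunE zp Snew_pref // /Sbody row_idx size_rowseq.
have -> : (count (fun w => row w == i) (pref pre (idx i j)) == n') = false.
  apply/negbTE/negP => c.
  have cz : completes pre (idx i j) by rewrite /completes row_idx.
  have e := cu _ _ zp yp cz cy (etrans (row_idx i j) (esym ry)).
  by move: jne; rewrite -e col_idx eqxx.
have Pz : (fun z => row z == i) (idx i j) by rewrite /= row_idx eqxx.
have e := @pref_map_filter _ _ col (fun z => row z == i) pre (idx i j) zp Pz (@injcol i pre).
by rewrite col_idx in e; rewrite /Q /rowseq e.
Qed.

End Prod.

Theorem lemma1 (k n k' n' : nat) :
  0 < k -> 0 < n -> 0 < k' -> 0 < n' ->
  has_GKS_strategy k n -> has_GKS_strategy k' n' ->
  has_GKS_strategy (k * k') (n * n').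
Proof.
move=> _ _ _ Hn' [S [T HS]] [S' [T' HS']].
exists (Snew Hn' S S'), (Tnew Hn' T T').
exact: strat.
Qed.
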